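(* Let $X\subset U\subset\mathbb{R}^n$, where $U$ is open and $X$ is closed in $U$. Let $f:X\to\mathbb{R}$, let $p\in\mathbb{N}$, and suppose there is a $\mathcal{C}^p$ Whitney field $F=(F^\alpha)_{|\alpha|\le p}$ on $X$ with $F^0=f$. Then for each $i\in\mathbb{N}$, $\rho^i(\Phi_0)$ is the graph of a function $\rho^i(E_0)\to\mathbb{R}$ (i.e. for each $a\in X$ and $\xi\in\rho^i(E_0)_a$ there is exactly one $\lambda$ with $(a,\xi,\lambda)\in\rho^i(\Phi_0)$), and if $a\in X$ and $\xi\in\rho^i(E_0)_a$, then the value of this function at $\xi$ equals $\xi(T^p_aF)=\xi(F,a)$.
   Context: $\mathcal{P}_p$: real polynomials on $\mathbb{R}^n$ of degree $\le p$; $\mathcal{P}_p^*$ its dual. For $\xi\in\mathcal{P}_p^*$, $b\in\mathbb{R}^n$, $|\alpha|\le p$: $\xi_\alpha(b):=\xi(\tfrac1{\alpha!}(x-b)^\alpha)$; $\delta_a(P)=P(a)$. A bundle over $X$ with fibres in $W$ is a subset of $X\times W$ whose fibres are linear subspaces. For a bundle $E\subset X\times\mathcal{P}_p^*$: $\Delta E=\{(a,b,\xi+\eta):a,b\in X,\xi\in E_a,\eta\in E_b,|a-b|^{p-|\alpha|}|\eta_\alpha(b)|\le1\ \forall|\alpha|\le p\}$, $E'=\{(a,\xi):(a,a,\xi)\in\overline{\Delta E}\}$ (closure in $X\times X\times\mathcal{P}_p^*$), $\rho(E)=\{(a,\xi):\xi\in\operatorname{Span}E'_a\}$. For a bundle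 $\Phi\subset X\times(\mathcal{P}_p^*\times\mathbb{R})$: $\Delta\Phi=\{(a,b,\xi+\eta,\lambda+\mu):a,b\in X,(\xi,\lambda)\in\Phi_a,(\eta,\mu)\in\Phi_b,|a-b|^{p-|\alpha|}|\eta_\alpha(b)|\le1\ \forall|\alpha|\le p\}$, $\Phi'=\{(a,\xi,\lambda):(a,a,\xi,\lambda)\in\overline{\Delta\Phi}\}$, $\rho(\Phi)=\{(a,v):v\in\operatorname{Span}\Phi'_a\}$. $E_0=\{(a,\lambda\delta_a):a\in X,\lambda\in\mathbb{R}\}$, $\Phi_0=\{(a,\lambda\delta_a,\lambda f(a)):a\in X,\lambda\in\mathbb{R}\}$. For $F=(F^\alpha)_{|\alpha|\le p}$, $F^\alpha:X\to\mathbb{R}$: $T^p_aF(x)=\sum_{|\alpha|\le p}\frac1{\alpha!}F^\alpha(a)(x-a)^\alpha$, $\xi(F,a)=\xi(T^p_aF)$, and $\delta_\alpha(a,b)=\big(F^\alpha(b)-\sum_{|\beta|\le p-|\alpha|}\frac1{\beta!}F^{\alpha+\beta}(a)(b-a)^\beta\big)/|b-a|^{p-|\alpha|}$; $F$ is a $\mathcal{C}^p$ Whitney field if for every $c\in X$, $|\alpha|\le p$, $\delta_\alpha(a,b)\to0$ as $a,b\to c$ in $X$, $a\ne b$. *)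

(* Defs.v *)
From HB Require Import structures.
From mathcomp Require Import all_boot all_algebra.
From mathcomp Require Import reals.
From mathcomp Require Import mpoly.
Set Implicit Arguments.
Unset Strict Implicit.
Import GRing.Theory Num.Theory.
Local Open Scope ring_scope.

Section Whitney.
Variable R : realType.
Variables n p : nat.

Definition pt := 'I_n -> R.
Definition midx := 'X_{1..n < p.+1}.
(* P_p^* : a functional xi is recorded by its values xi(x^alpha) on the
   monomial basis x^alpha, |alpha| <= p, of P_p *)
Definition dual := {ffun midx -> R}.

Definition normR (x : pt) : R := Num.sqrt (\sum_i (x i) ^+ 2).
Definition distR (x y : pt) : R := normR (fun i => x i - y i).

Definition mfact (m : 'X_{1..n}) : R := (\prod_(i < n) (m i)`!)%:R.
Definition shiftmono (b : pt) (m : 'X_{1..n}) : {mpoly R[n]} :=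
  \prod_(i < n) ('X_i - (b i)%:MP) ^+ (m i).
Definition pairing (xi : dual) (P : {mpoly R[n]}) : R :=
  \sum_(m : midx) xi m * P@_(val m).
Definition xi_at (xi : dual) (m : midx) (b : pt) : R :=
  pairing xi ((mfact (val m))^-1 *: shiftmono b (val m)).
Definition delta (a : pt) : dual := [ffun m : midx => ('X_[val m] : {mpoly R[n]}).@[a]].

Definition span (S : dual -> Prop) (xi : dual) : Prop :=
  exists k (v : 'I_k -> dual) (c : 'I_k -> R),
    (forall i, S (v i)) /\ forall m, xi m = \sum_(i < k) c i * v i m.
Definition spanP (S : dual -> R -> Prop) (xi : dual) (l : R) : Prop :=
  exists k (v : 'I_k -> dual) (w : 'I_k -> R) (c : 'I_k -> R),
    (forall i, S (v i) (w i)) /\ (forall m, xi m = \sum_(i < k) c i * v i m)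
    /\ l = \sum_(i < k) c i * w i.

Definition nearcond (a b : pt) (eta : dual) : Prop :=
  forall m : midx, distR a b ^+ (p - mdeg (val m)) * `|xi_at eta m b| <= 1.

Variable X : pt -> Prop.

Definition bundleE := pt -> dual -> Prop.
Definition bundlePhi := pt -> dual -> R -> Prop.

Definition DeltaE (E : bundleE) (a b : pt) (z : dual) : Prop :=
  X a /\ X b /\ exists xi eta, E a xi /\ E b eta /\ nearcond a b eta /\ z = xi + eta.
Definition DeltaPhi (Phi : bundlePhi) (a b : pt) (z : dual) (t : R) : Prop :=
  X a /\ X b /\ exists xi l eta mu, Phi a xi l /\ Phi b eta mu /\ nearcond a b eta
    /\ z = xi + eta /\ t = l + mu.

Definition closure3 (S : pt -> pt -> dual -> Prop) (a b : pt) (z : dual) : Prop :=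
  X a /\ X b /\ forall eps : R, 0 < eps -> exists a' b' z', S a' b' z' /\
    distR a a' < eps /\ distR b b' < eps /\ (forall m, `|z m - z' m| < eps).
Definition closure4 (S : pt -> pt -> dual -> R -> Prop) (a b : pt) (z : dual) (t : R)
  : Prop :=
  X a /\ X b /\ forall eps : R, 0 < eps -> exists a' b' z' t', S a' b' z' t' /\
    distR a a' < eps /\ distR b b' < eps /\ (forall m, `|z m - z' m| < eps)
    /\ `|t - t'| < eps.

Definition Eprime (E : bundleE) : bundleE := fun a xi => closure3 (DeltaE E) a a xi.
Definition Phiprime (Phi : bundlePhi) : bundlePhi :=
  fun a xi l => closure4 (DeltaPhi Phi) a a xi l.

Definition rhoE (E : bundleE) : bundleE := fun a xi => X a /\ span (Eprime E a) xi.
Definition rhoPhi (Phi : bundlePhi) : bundlePhi :=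
  fun a xi l => X a /\ spanP (Phiprime Phi a) xi l.

Definition E0 : bundleE := fun a xi => X a /\ exists l : R, forall m, xi m = l * delta a m.
Definition Phi0 (f : pt -> R) : bundlePhi :=
  fun a xi t => X a /\ exists l : R, (forall m, xi m = l * delta a m) /\ t = l * f a.

(* Whitney fields F = (F^alpha); components with |alpha| > p are ignored *)
Definition Fjet := 'X_{1..n} -> pt -> R.

Definition taylor (F : Fjet) (a : pt) : {mpoly R[n]} :=
  \sum_(m : midx) (F (val m) a * (mfact (val m))^-1) *: shiftmono a (val m).

Definition whitney_delta (F : Fjet) (m : midx) (a b : pt) : R :=
  (F (val m) b - \sum_(k : midx | (mdeg (val m) + mdeg (val k) <= p)%N)
        F (val m + val k)%MM a * (mfact (val k))^-1
          * \prod_(i < n) (b i - a i) ^+ (val k i))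
  / distR a b ^+ (p - mdeg (val m)).

Definition whitney_field (F : Fjet) : Prop :=
  forall c, X c -> forall m : midx, forall eps : R, 0 < eps ->
    exists del : R, 0 < del /\ forall a b, X a -> X b -> a <> b ->
      distR a c < del -> distR b c < del -> `|whitney_delta F m a b| < eps.

End Whitney.

Definition is_openR (R : realType) (n : nat) (U : pt R n -> Prop) : Prop :=
  forall a, U a -> exists eps : R, 0 < eps /\ forall b, distR a b < eps -> U b.

Definition rel_closedR (R : realType) (n : nat) (U X : pt R n -> Prop) : Prop :=
  forall a, U a -> (forall eps : R, 0 < eps -> exists b, X b /\ distR a b < eps) -> X a.

(* Main.v *)
Require Import Defs.
From HB Require Import structures.
From mathcomp Require Import all_boot all_order all_algebra.
From mathcomp Require Import reals.
From mathcomp Require Import mpoly.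
From mathcomp Require Import ring lra.
From Stdlib Require Import Classical FunctionalExtensionality.
Import Order.TTheory GRing.Theory Num.Theory.
Local Open Scope ring_scope.
Section Poly.
Variable R : realType.
Variables n p : nat.
Local Notation midx := (midx n p).
Local Notation mpR := {mpoly R[n]}.

Lemma midx_le (a : midx) i : (val a i <= p)%N.
Proof.
have := bmdeg a; rewrite mdegE (bigD1 i) //= ltnS; exact: leq_trans (leq_addr _ _).
Qed.

Lemma mdeg_le_i (g : 'X_{1..n}) i : (g i <= mdeg g)%N.
Proof. by rewrite mdegE (bigD1 i) //= leq_addr. Qed.

Definition ofmid (m : 'X_{1..n}) : midx := insubd bm0 m.

Lemma ofmidK m : (mdeg m <= p)%N -> val (ofmid m) = m.
Proof. by move=> h; rewrite /ofmid insubdK. Qed.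

Lemma ofmidN m : ~~ (mdeg m <= p)%N -> ofmid m = bm0.
Proof. move=> h; apply: val_inj; rewrite /ofmid val_insubd; case: ifP => //= h2; by rewrite ltnS in h2; rewrite h2 in h. Qed.

Lemma expand1 (Y : mpR) (c : R) (g : nat) : (g <= p)%N ->
  (Y + c%:MP) ^+ g = \sum_(j < p.+1) ('C(g, j)%:R * c ^+ (g - j)) *: Y ^+ j.
Proof.
move=> hg; rewrite addrC exprDn (big_ord_widen p.+1 (fun j => c%:MP ^+ (g - j) * Y ^+ j *+ 'C(g, j))) //.
rewrite big_mkcond /=; apply: eq_bigr => j _; case: ifP => hj.
  by rewrite -scalerA -mulr_natl -!mul_mpolyC rmorphXn rmorph_nat.
by rewrite bin_small ?mulr0n ?mul0r ?scale0r // ltnNge -ltnS hj.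
Qed.

End Poly.
Section Poly2.
Variable R : realType.
Variables n p : nat.
Local Notation midx := (midx n p).
Local Notation mpR := {mpoly R[n]}.
Local Notation ofmid := (@ofmid n p).

Lemma expandE (Y : 'I_n -> mpR) (c : 'I_n -> R) (g : 'X_{1..n}) : (mdeg g <= p)%N ->
 \prod_(i < n) (Y i + (c i)%:MP) ^+ g i =
 \sum_(a : midx) (\prod_(i < n) ('C(g i, val a i)%:R * c i ^+ (g i - val a i))) *: \prod_(i < n) Y i ^+ val a i.
Proof.
move=> hg.
rewrite (eq_bigr (fun i => \sum_(j < p.+1) ('C(g i, j)%:R * c i ^+ (g i - j)) *: Y i ^+ j)); last first.
  move=> i _; apply: expand1; apply: leq_trans hg; exact: mdeg_le_i.
rewrite bigA_distr_bigA /=.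
set H := fun h : 'I_n -> nat => \prod_(i < n) (('C(g i, h i)%:R * c i ^+ (g i - h i)) *: Y i ^+ h i).
transitivity (\sum_(f : {ffun 'I_n -> 'I_p.+1}) H (fun i => f i)) => //.
transitivity (\sum_(a : midx) H (fun i => val a i)); last first.
  by apply: eq_bigr => a _; rewrite /H scaler_prod.
pose phi (a : midx) : {ffun 'I_n -> 'I_p.+1} := [ffun i => inord (val a i)].
pose h (f : {ffun 'I_n -> 'I_p.+1}) : midx := ofmid [multinom (f i : nat) | i < n].
rewrite (reindex_onto h phi (P := xpredT)) /=; last first.
  move=> a _; apply: val_inj.
  have E : [multinom (phi a i : nat) | i < n] = val a.
    by apply/mnmP => i; rewrite mnmE ffunE inordK // ltnS midx_le.
  by rewrite /h E ofmidK // -ltnS; exact: bmdeg.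
rewrite [LHS](bigID (fun f => phi (h f) == f)) /= [X in _ + X]big1 ?addr0.
  apply: eq_bigr => f /eqP hf; rewrite /H; apply: eq_bigr => i _.
  have -> : (f i : nat) = val (h f) i by rewrite -{1}hf ffunE inordK // ltnS midx_le.
  by [].
move=> f hf; case: (boolP [forall i, f i <= g i]%N) => [/forallP hle | /forallPn [i hi]].
  exfalso; move/negP: hf; apply; apply/eqP.
  have hd : (mdeg [multinom (f i : nat) | i < n] <= p)%N.
    apply: leq_trans hg; rewrite !mdegE; apply: leq_sum => i _; by rewrite mnmE.
  apply/ffunP => i; rewrite ffunE; apply: val_inj; rewrite /= /h ofmidK // mnmE inordK //.
rewrite /H (bigD1 i) //= bin_small ?mulr0n ?mul0r ?scale0r ?mul0r //.
by rewrite ltnNge.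
Qed.

End Poly2.
Section Poly3.
Variable R : realType.
Variables n p : nat.
Local Notation midx := (midx n p).
Local Notation mpR := {mpoly R[n]}.
Local Notation ofmid := (@ofmid n p).

Lemma bmdeg_le (a : midx) : (mdeg (val a) <= p)%N.
Proof. rewrite -ltnS; exact: bmdeg. Qed.

Lemma shift_expand (x y : pt R n) (g : midx) : shiftmono x (val g) =
  \sum_(a : midx) (\prod_(i < n) ('C(val g i, val a i)%:R * (y i - x i) ^+ (val g i - val a i)))
     *: shiftmono y (val a).
Proof.
rewrite /shiftmono (eq_bigr (fun i => (('X_i - (y i)%:MP) + (y i - x i)%:MP) ^+ val g i)).
  by rewrite (@expandE R n p (fun i => 'X_i - (y i)%:MP) (fun i => y i - x i)) // bmdeg_le.
by move=> i _; rewrite rmorphB /= addrA subrK.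
Qed.

Definition Dsum (F : Fjet R n) (x y : pt R n) (a : midx) : R :=
  \sum_(k : midx | (mdeg (val a) + mdeg (val k) <= p)%N)
        F (val a + val k)%MM x * (mfact R (val k))^-1
          * \prod_(i < n) (y i - x i) ^+ (val k i).

Lemma mfact_neq0 (m : 'X_{1..n}) : mfact R m != 0.
Proof. by rewrite /mfact pnatr_eq0 -lt0n prodn_gt0 // => i; exact: fact_gt0. Qed.

Lemma mfactD (a k : 'X_{1..n}) : mfact R (a + k)%MM =
  (\prod_(i < n) 'C(a i + k i, a i))%:R * mfact R a * mfact R k.
Proof.
rewrite /mfact -!natrM; congr (_%:R).
rewrite -!big_split /=; apply: eq_bigr => i _.
by rewrite mnmDE -mulnA -(bin_fact (leq_addr (k i) (a i))) addKn.
Qed.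

End Poly3.
Arguments Dsum {R n} p F x y a.
Section Poly4.
Variable R : realType.
Variables n p : nat.
Local Notation midx := (midx n p).
Local Notation mpR := {mpoly R[n]}.
Local Notation ofmid := (@ofmid n p).

Lemma taylor_scalar (F : Fjet R n) (x y : pt R n) (a : midx) :
  \sum_(g : midx) F (val g) x * (mfact R (val g))^-1 *
     \prod_(i < n) ('C(val g i, val a i)%:R * (y i - x i) ^+ (val g i - val a i))
  = Dsum p F x y a * (mfact R (val a))^-1.
Proof.
rewrite /Dsum mulr_suml.
rewrite (bigID (fun g : midx => (val a <= val g)%MM)) /= [X in _ + X]big1 ?addr0; last first.
  move=> g; rewrite /lem => /forallPn [i hi].
  by rewrite (bigD1 i) //= bin_small ?mulr0n ?mul0r ?mulr0 // ltnNge.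
rewrite (reindex_onto (fun k : midx => ofmid (val a + val k)) (fun g : midx => ofmid (val g - val a))) /=; last first.
  move=> g hag.
  have h1 : val (ofmid (val g - val a)) = (val g - val a)%MM.
    by rewrite ofmidK // (leq_trans (mdegB _ _)) // bmdeg_le.
  by apply: val_inj; rewrite h1 [(val a + _)%MM]addmC submK // ofmidK // bmdeg_le.
rewrite (eq_bigl (fun k : midx => (mdeg (val a) + mdeg (val k) <= p)%N)); last first.
  move=> k /=.
  case: (leqP (mdeg (val a) + mdeg (val k)) p) => hk.
    have e1 : val (ofmid (val a + val k)) = (val a + val k)%MM by rewrite ofmidK // mdegD.
    rewrite e1 lem_addr /= [(val a + _)%MM]addmC addmK.
    by apply/eqP; apply: val_inj; rewrite ofmidK // bmdeg_le.
  rewrite ofmidN ?mdegD -?ltnNge //.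
  apply/negbTE/negP => /andP [ha /eqP hk2].
  have a0 : val a = 0%MM.
    apply/mnmP => i; move/mnm_lepP: ha => /(_ i); rewrite mnm0E /= => h.
    by apply/eqP; rewrite -leqn0.
  have k0 : mdeg (val k) = 0%N.
    rewrite -hk2 ofmidK; last by rewrite (leq_trans (mdegB _ _)) // bmdeg_le.
    by rewrite a0 /= subm0 mdeg0.
  by move: hk; rewrite a0 k0 mdeg0.
apply: eq_bigr => k hc.
have e1 : val (ofmid (val a + val k)) = (val a + val k)%MM by rewrite ofmidK // mdegD.

rewrite e1 big_split /= mfactD.
under [X in _ * (X * _) = _]eq_bigr => i _ do rewrite mnmDE.
under [X in _ * (_ * X) = _]eq_bigr => i _ do rewrite mnmDE addKn.
rewrite -natr_prod.
have hC : (\prod_(i < n) 'C(val a i + val k i, val a i))%:R != 0 :> R.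
  by rewrite pnatr_eq0 -lt0n prodn_gt0 // => i; rewrite bin_gt0 leq_addr.
have hA := @mfact_neq0 R n (val a).
have hK := @mfact_neq0 R n (val k).
field.
by rewrite hC hA hK.
Qed.

End Poly4.
Section Pair.
Variable R : realType.
Variables n p : nat.
Local Notation midx := (midx n p).
Local Notation mpR := {mpoly R[n]}.
Local Notation dual := (dual R n p).

Lemma taylor_shift (F : Fjet R n) (x y : pt R n) : taylor p F x =
  \sum_(a : midx) (Dsum p F x y a * (mfact R (val a))^-1) *: shiftmono y (val a).
Proof.
rewrite /taylor.
under eq_bigr => g _ do rewrite (@shift_expand R n p x y g) scaler_sumr.
under eq_bigr => g _ do under eq_bigr => a _ do rewrite scalerA.
rewrite exchange_big /=; apply: eq_bigr => a _.
by rewrite -scaler_suml taylor_scalar.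
Qed.

Lemma pairingD (xi : dual) (P Q : mpR) : pairing xi (P + Q) = pairing xi P + pairing xi Q.
Proof. by rewrite /pairing -big_split /=; apply: eq_bigr => m _; rewrite mcoeffD mulrDr. Qed.

Lemma pairingZ (xi : dual) c (P : mpR) : pairing xi (c *: P) = c * pairing xi P.
Proof. by rewrite /pairing mulr_sumr; apply: eq_bigr => m _; rewrite mcoeffZ mulrCA. Qed.

Lemma pairingN (xi : dual) (P : mpR) : pairing xi (- P) = - pairing xi P.
Proof. by rewrite -scaleN1r pairingZ mulN1r. Qed.

Lemma pairingB (xi : dual) (P Q : mpR) : pairing xi (P - Q) = pairing xi P - pairing xi Q.
Proof. by rewrite pairingD pairingN. Qed.

Lemma pairing0 (xi : dual) : pairing xi 0 = 0.
Proof. by rewrite /pairing big1 // => m _; rewrite mcoeff0 mulr0. Qed.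

Lemma pairing_sum (xi : dual) (I : Type) (r : seq I) (P : pred I) (G : I -> mpR) :
  pairing xi (\sum_(i <- r | P i) G i) = \sum_(i <- r | P i) pairing xi (G i).
Proof.
elim/big_rec2: _ => [|i y1 y2 _ <-]; first by rewrite pairing0.
by rewrite pairingD.
Qed.

Lemma pairing_lin (xi : dual) k (v : 'I_k -> dual) (c : 'I_k -> R) (P : mpR) :
  (forall m, xi m = \sum_(i < k) c i * v i m) ->
  pairing xi P = \sum_(i < k) c i * pairing (v i) P.
Proof.
move=> h; rewrite /pairing.
under eq_bigr => m _ do rewrite h mulr_suml.
rewrite exchange_big /=; apply: eq_bigr => i _.
by rewrite mulr_sumr; apply: eq_bigr => m _; rewrite mulrA.
Qed.

Lemma pairing_add (xi eta : dual) (P : mpR) :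
  pairing (xi + eta) P = pairing xi P + pairing eta P.
Proof.
by rewrite /pairing -big_split /=; apply: eq_bigr => m _; rewrite ffunE mulrDl.
Qed.

Lemma pairing_scal (xi eta : dual) l (P : mpR) : (forall m, xi m = l * eta m) ->
  pairing xi P = l * pairing eta P.
Proof.
by move=> h; rewrite /pairing mulr_sumr; apply: eq_bigr => m _; rewrite h mulrA.
Qed.

Lemma pairing_diff (F : Fjet R n) (x y : pt R n) (z : dual) :
  pairing z (taylor p F y) - pairing z (taylor p F x) =
  \sum_(a : midx) (F (val a) y - Dsum p F x y a) * xi_at z a y.
Proof.
rewrite (taylor_shift F x y) {1}/taylor -pairingB -sumrB pairing_sum.
apply: eq_bigr => a _.
by rewrite -scalerBl -mulrBl -scalerA pairingZ.
Qed.

End Pair.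
Section Delta.
Variable R : realType.
Variables n p : nat.
Local Notation midx := (midx n p).
Local Notation mpR := {mpoly R[n]}.
Local Notation dual := (dual R n p).

Lemma shiftmono0 (m : 'X_{1..n}) : shiftmono (fun _ => 0 : R) m = 'X_[m].
Proof.
by rewrite /shiftmono mpolyXE_id; apply: eq_bigr => i _; rewrite mpolyC0 subr0.
Qed.

Lemma pairingX (xi : dual) (b : midx) : pairing xi 'X_[val b] = xi b.
Proof.
rewrite /pairing (bigD1 b) //= mcoeffX eqxx mulr1 big1 ?addr0 // => m hm.
by rewrite mcoeffX (inj_eq val_inj) eq_sym (negbTE hm) mulr0.
Qed.

Lemma pairing_delta_span (a : pt R n) (d : midx -> R) :
  pairing (delta p a) (\sum_(b : midx) d b *: 'X_[val b]) =
  (\sum_(b : midx) d b *: 'X_[val b]).@[a].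
Proof.
rewrite pairing_sum raddf_sum /=; apply: eq_bigr => b _.
by rewrite pairingZ pairingX mevalZ ffunE.
Qed.

Lemma taylor_eval (F : Fjet R n) (a : pt R n) : (taylor p F a).@[a] = F 0%MM a.
Proof.
rewrite /taylor raddf_sum /= (bigD1 (@bm0 n p)) //= big1 ?addr0.
  rewrite mevalZ /shiftmono big1 ?meval1 ?mulr1; last by move=> i _; rewrite mnm0E expr0.
  rewrite /mfact big1 ?invr1 ?mulr1 // => i _; by rewrite mnm0E fact0.
move=> b hb; rewrite mevalZ /shiftmono rmorph_prod /=.
have : val b != 0%MM by apply: contra hb => /eqP h; apply/eqP; apply: val_inj.
case/boolP: [forall i, val b i == 0%N] => [/forallP h0 | /forallPn [i hi]] hb0.
  by exfalso; move/negP: hb0; apply; apply/eqP/mnmP => i; rewrite mnm0E; apply/eqP.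
rewrite (bigD1 i) //= rmorphXn /= mevalB mevalXU mevalC subrr expr0n (negbTE hi).
by rewrite mul0r mulr0.
Qed.

Lemma pairing_delta_taylor (F : Fjet R n) (a : pt R n) :
  pairing (delta p a) (taylor p F a) = F 0%MM a.
Proof.
rewrite -taylor_eval (@taylor_shift R n p F a (fun _ => 0)).
under eq_bigr => b _ do rewrite shiftmono0.
by rewrite pairing_delta_span.
Qed.

End Delta.
Section Anal.
Variable R : realType.
Variables n p : nat.
Local Notation midx := (midx n p).
Local Notation mpR := {mpoly R[n]}.
Local Notation dual := (dual R n p).
Local Notation pt := (pt R n).

Lemma distRxx (x : pt) : distR x x = 0.
Proof. by rewrite /distR /normR big1 ?sqrtr0 // => i _; rewrite subrr expr0n. Qed.

Lemma distR_ge0 (x y : pt) : 0 <= distR x y.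
Proof. exact: sqrtr_ge0. Qed.

Lemma distRC (x y : pt) : distR x y = distR y x.
Proof.
rewrite /distR /normR; congr Num.sqrt; apply: eq_bigr => i _.
by rewrite -sqrrN opprB.
Qed.

Lemma distR_eq0 (x y : pt) : distR x y = 0 -> x = y.
Proof.
move=> /eqP; rewrite sqrtr_eq0 => h.
have h0 : \sum_i (x i - y i) ^+ 2 == 0.
  by rewrite eq_le h /= sumr_ge0 // => i _; exact: sqr_ge0.
move: h0; rewrite psumr_eq0 => [/allP hall|i _]; last exact: sqr_ge0.
apply: functional_extensionality => i.
have := hall i (mem_index_enum i); rewrite implyTb sqrf_eq0 subr_eq0.
by move/eqP.
Qed.

Lemma diff_bound (F : Fjet R n) (z : dual) (x y : pt) (B : R) : 0 <= B ->
  (x <> y -> forall a : midx, `|whitney_delta F a x y| <= B) ->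
  `|pairing z (taylor p F y) - pairing z (taylor p F x)| <=
    B * \sum_(a : midx) distR x y ^+ (p - mdeg (val a)) * `|xi_at z a y|.
Proof.
move=> hB hw; case: (classic (x = y)) => [<-|hxy].
  rewrite subrr normr0 mulr_ge0 // sumr_ge0 // => a _.
  by rewrite mulr_ge0 ?normr_ge0 ?exprn_ge0 ?distR_ge0.
rewrite pairing_diff mulr_sumr; apply: le_trans (ler_norm_sum _ _ _) _.
apply: ler_sum => a _.
have hd : distR x y ^+ (p - mdeg (val a)) != 0.
  by rewrite expf_neq0 //; apply/eqP => /distR_eq0.
have -> : F (val a) y - Dsum p F x y a = whitney_delta F a x y * distR x y ^+ (p - mdeg (val a)).
  by rewrite /whitney_delta /Dsum divfK.
rewrite 2!normrM (ger0_norm (exprn_ge0 _ (distR_ge0 _ _))) mulrA.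
apply: ler_wpM2r; first exact: normr_ge0.
apply: ler_wpM2r; first exact: exprn_ge0 (distR_ge0 _ _).
exact: hw.
Qed.

Lemma whitney_unif (X : pt -> Prop) (F : Fjet R n) (c : pt) (e : R) :
  whitney_field p X F -> X c -> 0 < e ->
  exists del, 0 < del /\ forall a b, X a -> X b -> a <> b -> distR a c < del ->
    distR b c < del -> forall m : midx, `|whitney_delta F m a b| < e.
Proof.
move=> hw hc he.
suff : forall s : seq midx, exists del, 0 < del /\ forall m, m \in s -> forall a b,
    X a -> X b -> a <> b -> distR a c < del -> distR b c < del -> `|whitney_delta F m a b| < e.
  case/(_ (enum {: midx})) => del [hd h]; exists del; split => // a b ha hb hab hac hbc m.
  by apply: h => //; rewrite mem_enum.
elim => [|m s [d [hd ih]]]; first by exists 1; split.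
have [d2 [hd2 h2]] := hw c hc m e he.
exists (Num.min d d2); split; first by rewrite lt_min hd hd2.
move=> m'; rewrite inE => /orP [/eqP -> | hm'] a b ha hb hab;
  rewrite !lt_min => /andP [h1 h1'] /andP [h3 h3'].
  exact: h2.
exact: ih.
Qed.

End Anal.
Section Key.
Variable R : realType.
Variables n p : nat.
Local Notation midx := (midx n p).
Local Notation mpR := {mpoly R[n]}.
Local Notation dual := (dual R n p).
Local Notation pt := (pt R n).

Lemma key (X : pt -> Prop) (F : Fjet R n) (a : pt) (xi : dual) (e : R) :
  whitney_field p X F -> X a -> 0 < e ->
  exists del, 0 < del /\ forall a' b' (xi' eta' : dual), X a' -> X b' ->
    nearcond a' b' eta' -> distR a a' < del -> distR a b' < del ->
    (forall m, `|xi m - (xi' + eta') m| < del) ->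
    `|pairing xi (taylor p F a) - (pairing xi' (taylor p F a') + pairing eta' (taylor p F b'))| < e.
Proof.
move=> hw ha he.
set Ta := taylor p F a.
pose C1 := \sum_(m : midx) `|Ta@_(val m)|.
pose Q (al : midx) := (mfact R (val al))^-1 *: shiftmono a (val al).
pose Ks := \sum_(al : midx) \sum_(m : midx) (`|xi m| + 1) * `|(Q al)@_(val m)|.
pose M := \sum_(al : midx) (1 : R).
have hC1 : 0 <= C1 by rewrite sumr_ge0.
have hKs : 0 <= Ks by rewrite sumr_ge0 // => al _; rewrite sumr_ge0 // => m _; rewrite mulr_ge0 // addr_ge0.
have hM : 0 <= M by rewrite sumr_ge0.
pose S := C1 + Ks + M.
pose e0 := e / (S + 1).
have hS1 : 0 < S + 1 by rewrite /S; lra.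
have he0 : 0 < e0 by rewrite divr_gt0.
have hE : e0 * (S + 1) = e by rewrite /e0 divfK // gt_eqF.
have [dW [hdW hW]] := @whitney_unif R n p X F a e0 hw ha he0.
exists (Num.min (Num.min e0 1) dW); split; first by rewrite !lt_min he0 hdW ltr01.
move=> a' b' xi' eta' ha' hb' hnear hda hdb hz.
move: hda hdb; rewrite !lt_min => /andP [/andP [hda1 hda2] hda3] /andP [/andP [hdb1 hdb2] hdb3].
have hz1 : forall m, `|xi m - (xi' + eta') m| <= e0.
  by move=> m; move: (hz m); rewrite !lt_min => /andP [/andP [h1 _] _]; exact: ltW.
have hz2 : forall m, `|xi m - (xi' + eta') m| <= 1.
  by move=> m; move: (hz m); rewrite !lt_min => /andP [/andP [_ h1] _]; exact: ltW.
set z' := xi' + eta'.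
set Ta' := taylor p F a'.
set Tb' := taylor p F b'.
have -> : pairing xi Ta - (pairing xi' Ta' + pairing eta' Tb') =
  (pairing xi Ta - pairing z' Ta) + (pairing z' Ta - pairing z' Ta') - (pairing eta' Tb' - pairing eta' Ta').
  rewrite /z' !pairing_add; ring.
have b1 : `|pairing xi Ta - pairing z' Ta| <= e0 * C1.
  rewrite /pairing -sumrB mulr_sumr; apply: le_trans (ler_norm_sum _ _ _) _.
  apply: ler_sum => m _; rewrite -mulrBl normrM; apply: ler_wpM2r => //; exact: hz1.
have b2 : `|pairing z' Ta - pairing z' Ta'| <= e0 * Ks.
  apply: le_trans (@diff_bound R n p F z' a' a e0 (ltW he0) _) _.
    move=> hne al; apply: ltW; apply: hW => //; first by rewrite distRC.
    by rewrite distRxx.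
  apply: ler_wpM2l; first exact: ltW.
  apply: ler_sum => al _.
  rewrite -[X in _ <= X]mul1r; apply: ler_pM; rewrite ?exprn_ge0 ?normr_ge0 ?distR_ge0 //.
    by apply: exprn_ile1; rewrite ?distR_ge0 // distRC ltW.
  rewrite /xi_at -/(Q al) /pairing; apply: le_trans (ler_norm_sum _ _ _) _.
  apply: ler_sum => m _; rewrite normrM; apply: ler_wpM2r => //.
  have -> : z' m = xi m + (z' m - xi m) by rewrite addrC subrK.
  apply: le_trans (ler_normD _ _) _; rewrite lerD2l distrC; exact: hz2.
have b3 : `|pairing eta' Tb' - pairing eta' Ta'| <= e0 * M.
  apply: le_trans (@diff_bound R n p F eta' a' b' e0 (ltW he0) _) _.
    move=> hne al; apply: ltW; apply: hW => //; first by rewrite distRC.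
    by rewrite distRC.
  apply: ler_wpM2l; first exact: ltW.
  by apply: ler_sum => al _; exact: hnear.
apply: le_lt_trans (ler_normB _ _) _.
apply: le_lt_trans (lerD (ler_normD _ _) (lexx _)) _.
have : e0 * C1 + e0 * Ks + e0 * M < e.
  by rewrite -!mulrDr -hE ltr_pM2l // /S ltrDl ltr01.
move: b1 b2 b3; lra.
Qed.

End Key.
Section Main.
Variable R : realType.
Variables n p : nat.
Local Notation midx := (midx n p).
Local Notation dual := (dual R n p).
Local Notation pt := (pt R n).

Lemma eq_approx (w q : R) : (forall e, 0 < e -> `|w - q| < e) -> w = q.
Proof.
move=> h; apply/eqP; rewrite -subr_eq0 -normr_eq0 eq_le normr_ge0 andbT.
apply/ler_addgt0Pr => e he; rewrite add0r; exact: ltW (h e he).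
Qed.

Variable X : pt -> Prop.
Variable F : Fjet R n.
Hypothesis hw : whitney_field p X F.

Local Notation T a := (taylor p F a).

Lemma step (Phi : bundlePhi R n p) (E : bundleE R n p) :
  (forall a xi l, Phi a xi l -> E a xi /\ l = pairing xi (T a)) ->
  (forall a xi, E a xi -> Phi a xi (pairing xi (T a))) ->
  (forall a xi l, rhoPhi X Phi a xi l -> rhoE X E a xi /\ l = pairing xi (T a)) /\
  (forall a xi, rhoE X E a xi -> rhoPhi X Phi a xi (pairing xi (T a))).
Proof.
move=> h1 h2.
have hA : forall a v w, Phiprime X Phi a v w -> Eprime X E a v /\ w = pairing v (T a).
  move=> a v w [ha [_ hc]]; split.
    split => //; split => // eps heps.
    have [a' [b' [z' [t' [[ha' [hb' [xi' [l' [eta' [mu' [hP1 [hP2 [hn [hz ht]]]]]]]]]] [hd1 [hd2 [hm _]]]]]]]] := hc eps heps.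
    exists a', b', z'; split => //; split => //; split => //.
    exists xi', eta'; split; first exact: (h1 _ _ _ hP1).1.
    by split; first exact: (h1 _ _ _ hP2).1.
  apply: eq_approx => e he.
  have he2 : 0 < e / 2 by rewrite divr_gt0.
  have [del [hdel hk]] := @key R n p X F a v (e / 2) hw ha he2.
  have hmin : 0 < Num.min del (e / 2) by rewrite lt_min hdel he2.
  have [a' [b' [z' [t' [[ha' [hb' [xi' [l' [eta' [mu' [hP1 [hP2 [hn [hz ht]]]]]]]]]] [hd1 [hd2 [hm hw']]]]]]]] := hc _ hmin.
  move: hd1 hd2 hw'; rewrite !lt_min => /andP [hd1 _] /andP [hd2 _] /andP [_ hw'].
  have hm' : forall m, `|v m - (xi' + eta') m| < del.
    by move=> m; move: (hm m); rewrite hz lt_min => /andP [].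
  have := hk a' b' xi' eta' ha' hb' hn hd1 hd2 hm'.
  rewrite -(h1 _ _ _ hP1).2 -(h1 _ _ _ hP2).2 -ht => hk'.
  have : `|w - pairing v (T a)| <= `|w - t'| + `|pairing v (T a) - t'|.
    by rewrite (distrC (pairing v _)); apply: le_trans (ler_normD _ _); rewrite addrA subrK.
  move: hk' hw'; rewrite distrC; lra.
have hB : forall a v, Eprime X E a v -> Phiprime X Phi a v (pairing v (T a)).
  move=> a v [ha [_ hc]]; split => //; split => // eps heps.
  have [del [hdel hk]] := @key R n p X F a v eps hw ha heps.
  have hmin : 0 < Num.min del eps by rewrite lt_min hdel heps.
  have [a' [b' [z' [[ha' [hb' [xi' [eta' [hE1 [hE2 [hn hz]]]]]]] [hd1 [hd2 hm]]]]]] := hc _ hmin.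
  move: hd1 hd2; rewrite !lt_min => /andP [hd1 hd1'] /andP [hd2 hd2'].
  exists a', b', z', (pairing xi' (T a') + pairing eta' (T b')); split.
    split => //; split => //.
    exists xi', (pairing xi' (T a')), eta', (pairing eta' (T b')).
    split; first exact: h2.
    split; first exact: h2.
    by split => //; split.
  split => //; split => //; split.
    by move=> m; move: (hm m); rewrite lt_min => /andP [].
  by apply: hk => // m; move: (hm m); rewrite hz lt_min => /andP [].
split.
  move=> a xi l [ha [k [v [w [c [hv [hxi hl]]]]]]]; split.
    split => //; exists k, v, c; split => // i; exact: (hA _ _ _ (hv i)).1.
  rewrite hl (@pairing_lin _ _ _ _ _ _ _ _ hxi); apply: eq_bigr => i _.
  by rewrite (hA _ _ _ (hv i)).2.
move=> a xi [ha [k [v [c [hv hxi]]]]]; split => //.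
exists k, v, (fun i => pairing (v i) (T a)), c; split; first by move=> i; exact: hB.
by split => //; rewrite (@pairing_lin _ _ _ _ _ _ _ _ hxi).
Qed.

End Main.
Theorem lemma4p17 (R : realType) (n p : nat) (U X : pt R n -> Prop)
  (f : pt R n -> R) (F : Fjet R n) :
  is_openR U -> (forall x, X x -> U x) -> rel_closedR U X ->
  whitney_field p X F -> (forall a, X a -> F 0%MM a = f a) ->
  forall i : nat,
    (forall a xi l, iter i (@rhoPhi R n p X) (@Phi0 R n p X f) a xi l ->
        iter i (@rhoE R n p X) (@E0 R n p X) a xi) /\
    (forall a (xi : dual R n p), X a -> iter i (@rhoE R n p X) (@E0 R n p X) a xi ->
        (exists! l, iter i (@rhoPhi R n p X) (@Phi0 R n p X f) a xi l) /\
        forall l, iter i (@rhoPhi R n p X) (@Phi0 R n p X f) a xi l -> l = pairing xi (taylor p F a)).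
Proof.
move=> _ _ _ hw hF.
have ind : forall i,
  (forall a xi l, iter i (@rhoPhi R n p X) (@Phi0 R n p X f) a xi l ->
     iter i (@rhoE R n p X) (@E0 R n p X) a xi /\ l = pairing xi (taylor p F a)) /\
  (forall a xi, iter i (@rhoE R n p X) (@E0 R n p X) a xi ->
     iter i (@rhoPhi R n p X) (@Phi0 R n p X f) a xi (pairing xi (taylor p F a))).
  elim => [|i [ih1 ih2]] /=; last exact: step.
  split.
    move=> a xi l [ha [l0 [hxi hl]]]; split; first by split => //; exists l0.
    by rewrite hl (@pairing_scal _ _ _ _ _ _ _ hxi) pairing_delta_taylor hF.
  move=> a xi [ha [l0 hxi]]; split => //; exists l0; split => //.
  by rewrite (@pairing_scal _ _ _ _ _ _ _ hxi) pairing_delta_taylor hF.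
move=> i; have [h1 h2] := ind i; split.
  by move=> a xi l /h1 [].
move=> a xi ha hE; split.
  exists (pairing xi (taylor p F a)); split; first exact: h2.
  by move=> l /h1 [_ ->].
by move=> l /h1 [_ ->].
Qed.
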